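(* Let $G=(V,E)$ be a graph with colouring $f:V\to\{B,R\}$ and let $E'$ be an optimal solution to the MIAE problem on $(G,f)$. Then for every red node $v$, exactly $\max(r(v)-b(v),0)$ edges of $E'\setminus E$ are incident to $v$, where $r(v),b(v)$ are the numbers of red and blue neighbours of $v$ in $G$.
   Context: Graphs are finite, simple and undirected. A colouring $f:V\to\{B,R\}$ partitions $V$ into the blue nodes $B=f^{-1}(B)$ and red nodes $R=f^{-1}(R)$. For an edge set $E'$ on $V$ and $v\in V$, let $b_{E'}(v)$ and $r_{E'}(v)$ be the numbers of blue and red neighbours of $v$ in $(V,E')$; write $b(v)=b_E(v)$, $r(v)=r_E(v)$. A node $v$ is under (majority) illusion in $(V,E')$ if $r_{E'}(v)>b_{E'}(v)$. Standing assumption: $|B|>|R|$. An optimal solution to MIAE is an edge set $E'\supseteq E$ on $V$ such that no node is under illusion in $(V,E')$ and $|E'\setminus E|$ is minimum among all such sets. *)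

(* Defs.v *)
From mathcomp Require Import all_boot.
Set Implicit Arguments. Unset Strict Implicit. Unset Printing Implicit Defensive.

(* A simple graph on a finite vertex type V is given by its edge set:
   a set of unordered pairs {u,v} (2-element subsets of V). *)
Definition edge_set (V : finType) (E : {set {set V}}) : Prop :=
  forall s, s \in E -> #|s| = 2.

(* Colouring: true = Blue, false = Red. *)
Definition colouring (V : finType) := V -> bool.

Definition blue_nodes (V : finType) (f : colouring V) : {set V} := [set x | f x].
Definition red_nodes (V : finType) (f : colouring V) : {set V} := [set x | ~~ f x].

Definition nbrs (V : finType) (E : {set {set V}}) (v : V) : {set V} :=
  [set u | (u != v) && ([set u; v] \in E)].

Definition bdeg (V : finType) (f : colouring V) (E : {set {set V}}) (v : V) : nat :=
  #|[set u in nbrs E v | f u]|.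
Definition rdeg (V : finType) (f : colouring V) (E : {set {set V}}) (v : V) : nat :=
  #|[set u in nbrs E v | ~~ f u]|.

Definition under_illusion (V : finType) (f : colouring V) (E : {set {set V}}) (v : V) : Prop :=
  bdeg f E v < rdeg f E v.

Definition MIAE_feasible (V : finType) (f : colouring V) (E E' : {set {set V}}) : Prop :=
  [/\ edge_set E', E \subset E' & forall v, ~ under_illusion f E' v].

Definition MIAE_optimal (V : finType) (f : colouring V) (E E' : {set {set V}}) : Prop :=
  MIAE_feasible f E E' /\
  forall E'', MIAE_feasible f E E'' -> #|E' :\: E| <= #|E'' :\: E|.

Definition incident_count (V : finType) (F : {set {set V}}) (v : V) : nat :=
  #|[set s in F | v \in s]|.

(* Main.v *)
Require Import Defs.
From mathcomp Require Import all_boot zify.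
Set Implicit Arguments. Unset Strict Implicit.

Section H.
Variable V : finType.
Implicit Types (E F : {set {set V}}) (S : {set V}) (u v w x : V).

Lemma set2_eqE x w u v : x != w ->
  ([set x; w] == [set u; v]) = ((x == u) && (w == v)) || ((x == v) && (w == u)).
Proof.
move=> xw; apply/idP/idP.
- move/eqP=> e.
  have hx : x \in [set u; v] by rewrite -e !inE eqxx.
  have hw : w \in [set u; v] by rewrite -e !inE eqxx orbT.
  move: hx hw; rewrite !inE => /orP[]/eqP hx /orP[]/eqP hw; subst;
    rewrite ?eqxx ?orbT //; by rewrite eqxx in xw.
- case/orP=> /andP[/eqP -> /eqP ->] //; by rewrite setUC.
Qed.

Lemma in_nbrs F w x : (x \in nbrs F w) = (x != w) && ([set x; w] \in F).
Proof. by rewrite inE. Qed.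

Lemma nbrs_rm F u v w : u != v ->
  nbrs (F :\ [set u; v]) w =
  if w == v then nbrs F w :\ u else if w == u then nbrs F w :\ v else nbrs F w.
Proof.
move=> uv; apply/setP=> x.
rewrite in_nbrs in_setD1.
case: (boolP (x == w)) => [/eqP ->|xw] /=.
  case: ifP => _; first by rewrite !inE eqxx andbF.
  by case: ifP => _; rewrite !inE eqxx ?andbF.


rewrite set2_eqE //.
case: ifP => [/eqP wv|wv].
  subst w; rewrite in_setD1 in_nbrs xw (negbTE xw) andbT /=.
  by rewrite orbF.
case: ifP => [/eqP wu|wu].
  subst w; rewrite in_setD1 in_nbrs xw andbT andbF /=.
  by [].
by rewrite !andbF /= in_nbrs xw.
Qed.

Variable f : colouring V.
Definition Bl := [set y | f y].
Definition bl S := #|S :&: Bl|.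
Definition rd S := #|S :&: ~: Bl|.

Lemma bdegE E w : bdeg f E w = bl (nbrs E w).
Proof. by apply: eq_card => y; rewrite !inE. Qed.
Lemma rdegE E w : rdeg f E w = rd (nbrs E w).
Proof. by apply: eq_card => y; rewrite !inE. Qed.

Lemma bl_sub (S T : {set V}) : S \subset T -> bl S <= bl T.
Proof. by move=> h; apply: subset_leq_card; apply: setSI. Qed.
Lemma rd_sub (S T : {set V}) : S \subset T -> rd S <= rd T.
Proof. by move=> h; apply: subset_leq_card; apply: setSI. Qed.

Lemma bl_rm_red S y : ~~ f y -> bl (S :\ y) = bl S.
Proof.
move=> hy; apply: eq_card => z; rewrite !inE.
case: (boolP (z == y)) => [/eqP->|] /=; last by [].
by rewrite (negbTE hy) andbF.
Qed.
Lemma rd_rm_blue S y : f y -> rd (S :\ y) = rd S.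
Proof.
move=> hy; apply: eq_card => z; rewrite !inE.
case: (boolP (z == y)) => [/eqP->|] /=; last by [].
by rewrite hy andbF.
Qed.
Lemma bl_rm S y : bl S <= (bl (S :\ y)).+1.
Proof.
rewrite /bl (cardsD1 y (S :&: Bl)).
have -> : (S :&: Bl) :\ y = (S :\ y) :&: Bl.
  by apply/setP=> z; rewrite !inE andbA.
by case: (y \in _).
Qed.

Lemma split_card (A0 A P : {set V}) : A0 \subset A ->
  #|A :&: P| = #|A0 :&: P| + #|(A :\: A0) :&: P|.
Proof.
move=> sub; rewrite -(cardsID A0 (A :&: P)); congr (_ + _); apply: eq_card => z;
rewrite !inE.
  case h: (z \in A0); last by rewrite !andbF.
  by rewrite (subsetP sub z h) andbT.
by rewrite andbA.
Qed.

Lemma card_incident F w : edge_set F -> incident_count F w = #|nbrs F w|.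
Proof.
move=> hF; rewrite /incident_count.
have -> : [set s in F | w \in s] = [set [set y; w] | y in nbrs F w].
  apply/setP=> s; rewrite inE; apply/andP/imsetP.
  - case=> sF ws; have /cards2P [a [b [ab es]]] : #|s| == 2 by rewrite (hF s sF).
    move: ws; rewrite es !inE => /orP[]/eqP wab; subst.
      exists b; last by rewrite setUC.
      by rewrite in_nbrs eq_sym ab setUC.
    by exists a; rewrite // in_nbrs ab.
  - case=> y; rewrite in_nbrs => /andP[_ h] ->; by rewrite h !inE eqxx orbT.
rewrite card_in_imset //.
move=> a b; rewrite !in_nbrs => /andP[aw _] /andP[bw _] e.
have : a \in [set b; w] by rewrite -e !inE eqxx.
by rewrite !inE (negbTE aw) orbF => /eqP.
Qed.

End H.

Theorem mainTheorem3 (V : finType) (E : {set {set V}}) (f : colouring V)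
  (E' : {set {set V}}) :
  edge_set E ->
  #|red_nodes f| < #|blue_nodes f| ->
  MIAE_optimal f E E' ->
  forall v, ~~ f v ->
    incident_count (E' :\: E) v = maxn (rdeg f E v - bdeg f E v) 0.
Proof.
move=> hE _ [[hE' sub nill] opt] v vr.
have hED : edge_set (E' :\: E).
  by move=> s; rewrite inE => /andP[_ h]; exact: hE' s h.
rewrite maxn0 (card_incident v hED).
have -> : nbrs (E' :\: E) v = nbrs E' v :\: nbrs E v.
  by apply/setP=> x; rewrite !inE; case: (x != v).
set A := nbrs E' v; set A0 := nbrs E v.
have sA : A0 \subset A.
  apply/subsetP => x; rewrite !in_nbrs => /andP[-> h].
  by rewrite (subsetP sub _ h).
set D := A :\: A0.
rewrite rdegE bdegE -/A0.
have hb := split_card (Bl f) sA; have hr := split_card (~: Bl f) sA.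
rewrite -/D in hb hr.
have hD : #|D| = #|D :&: Bl f| + #|D :&: ~: Bl f| by rewrite -(cardsID (Bl f) D) setDE.
have nill' : forall F w, ~ under_illusion f F w -> rd f (nbrs F w) <= bl f (nbrs F w).
  by move=> F w; rewrite /under_illusion bdegE rdegE => h; rewrite leqNgt; apply/negP.
have feas := nill' _ _ (nill v); rewrite -/A in feas.
move: feas hb hr; rewrite /bl /rd => feas hb hr.
apply/eqP; rewrite eqn_leq; apply/andP; split; last by lia.
rewrite leqNgt; apply/negP => big.
have [u uD cond] : exists2 u, u \in D & (~~ f u) || (rd f A < bl f A).
  case: (pickP [pred u | u \in D :&: ~: Bl f]) => [u hu | none].
    exists u; first by move: hu; rewrite /= !inE => /andP[].
    by move: hu; rewrite /= !inE => /andP[_ ->].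
  have z : #|D :&: ~: Bl f| = 0 by apply: eq_card0 => x; move: (none x); rewrite /= => ->.
  have : 0 < #|D| by lia.
  case/card_gt0P => u uD; exists u => //; apply/orP; right; rewrite /rd /bl; lia.
move: uD; rewrite /D in_setD !in_nbrs => /andP[nA0 /andP[uv uE']].
have ue : [set u; v] \notin E by move: nA0; rewrite uv.
pose E'' := E' :\ [set u; v].
have feas'' : MIAE_feasible f E E''.
  split.
  - by move=> s; rewrite in_setD1 => /andP[_ h]; exact: hE' s h.
  - apply/subsetP => s sE; rewrite in_setD1 (subsetP sub _ sE) andbT.
    by apply/eqP => e; rewrite -e sE in ue.
  - move=> w; rewrite /under_illusion bdegE rdegE /E'' nbrs_rm // => lt.
    move: (nill' _ _ (nill w)) => nw.
    move: lt; case: ifP => [/eqP wv | _].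
      subst w; rewrite -/A in nw *; case/orP: cond => [ur | lt].
        rewrite bl_rm_red //; have := rd_sub f (subD1set A u); lia.
      have := bl_rm f A u; have := rd_sub f (subD1set A u); rewrite /bl /rd; move: nw lt; rewrite /bl /rd; lia.
    case: ifP => _; last by lia.
    rewrite bl_rm_red //; have := rd_sub f (subD1set (nbrs E' w) v); lia.
have := opt _ feas''.
have -> : E'' :\: E = (E' :\: E) :\ [set u; v].
  by apply/setP=> s; rewrite !inE andbCA.
rewrite (cardsD1 [set u; v] (E' :\: E)) in_setD ue uE' /=.
by rewrite add1n ltnn.
Qed.
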